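(* Let $x_k\in\mathbb{R}^n_{>0}$ satisfy $\mathbf 1^Tx_k\le(1+\epsilon)\mathrm{OPT}$. Then for every $t\in\{0,\dots,w-1\}$ and every $u\in\mathbb{R}^n_{\ge0}$, $$\langle\alpha\,\xi^{(t)}_k,\ x_k-u\rangle\le \alpha^2\,\mathrm{OPT}+V_{x_k}(u)-V_{x^{(t)}_{k+1}}(u).$$
   Context: Standing setup: $A\in\mathbb{R}^{m\times n}_{\ge 0}$ with no zero column; packing LP $\max\{\mathbf 1^Tx:x\ge0,Ax\le\mathbf 1\}$ with optimal value $\mathrm{OPT}$; $\epsilon\in(0,1/2]$; natural $\log$ unless $\log_2$. $\mu=\frac{\epsilon}{4\log(nm/\epsilon)}$, $p_j(x)=\exp\big(\frac{1}{\mu}((Ax)_j-1)\big)$, $f_\mu(x)=-\mathbf 1^Tx+\mu\sum_j p_j(x)$, $\nabla_i f_\mu(x)=-1+\sum_jA_{ji}p_j(x)$, $\alpha=\mu/20$, $w=\lceil\log_2(1/\epsilon)\rceil$. With $g_i=\nabla_i f_\mu(x_k)$: $\xi_k[i]=0$ if $|g_i|\le\epsilon$, $\xi_k[i]=g_i$ if $\epsilon<|g_i|\le1$, $\xi_k[i]=1$ if $g_i>1$; $\xi^{(t)}_k[i]=\xi_k[i]$ if $\epsilon2^t<|\xi_k[i]|\le\epsilon2^{t+1}$ and $0$ otherwise; $x^{(t)}_{k+1}[i]=x_k[i]\exp(-\alpha\xi^{(t)}_k[i])$. Bregman divergence: $V_x(y)=\sum_{i\in[n]}\big(y[i]\log\frac{y[i]}{x[i]}+x[i]-y[i]\big)$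 for $x>0$, $y\ge 0$ (with $0\log0=0$). *)

(* Defs.v *)
From Stdlib Require Import Reals Lra Lia List.
Open Scope R_scope.

(* Vectors in R^n are functions nat -> R (only indices i < n matter);
   a matrix A in R^{m x n} is A : nat -> nat -> R, entry A j i (row j < m, column i < n). *)

Definition fsum (n : nat) (f : nat -> R) : R :=
  fold_right Rplus 0 (map f (seq 0 n)).

Definition Ax (n : nat) (A : nat -> nat -> R) (x : nat -> R) (j : nat) : R :=
  fsum n (fun i => A j i * x i).

Definition packing_feasible (m n : nat) (A : nat -> nat -> R) (x : nat -> R) : Prop :=
  (forall i, (i < n)%nat -> 0 <= x i) /\
  (forall j, (j < m)%nat -> Ax n A x j <= 1).

Definition is_packing_OPT (m n : nat) (A : nat -> nat -> R) (OPT : R) : Prop :=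
  (exists x, packing_feasible m n A x /\ fsum n x = OPT) /\
  (forall x, packing_feasible m n A x -> fsum n x <= OPT).

Definition mu_param (m n : nat) (eps : R) : R :=
  eps / (4 * ln (INR n * INR m / eps)).

Definition alpha_param (m n : nat) (eps : R) : R := mu_param m n eps / 20.

(* w = ceil(log_2 (1/eps)), ceil y := - floor(- y) *)
Definition w_param (eps : R) : nat :=
  Z.to_nat (- Int_part (- (ln (1 / eps) / ln 2)))%Z.

Definition pj (m n : nat) (eps : R) (A : nat -> nat -> R) (x : nat -> R) (j : nat) : R :=
  exp (/ mu_param m n eps * (Ax n A x j - 1)).

Definition grad_fmu (m n : nat) (eps : R) (A : nat -> nat -> R) (x : nat -> R) (i : nat) : R :=
  -1 + fsum m (fun j => A j i * pj m n eps A x j).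

(* xi_k[i]: 0 if |g| <= eps; g if eps < |g| <= 1; 1 if g > 1.
   (g >= -1 always holds, so the last branch is exactly the case g > 1.) *)
Definition xi (m n : nat) (eps : R) (A : nat -> nat -> R) (x : nat -> R) (i : nat) : R :=
  let g := grad_fmu m n eps A x i in
  if Rle_dec (Rabs g) eps then 0
  else if Rle_dec (Rabs g) 1 then g
  else 1.

Definition xi_t (m n : nat) (eps : R) (A : nat -> nat -> R) (x : nat -> R) (t : nat) (i : nat) : R :=
  let v := xi m n eps A x i in
  if Rlt_dec (eps * 2 ^ t) (Rabs v) then
    (if Rle_dec (Rabs v) (eps * 2 ^ (S t)) then v else 0)
  else 0.

Definition x_next (m n : nat) (eps : R) (A : nat -> nat -> R) (x : nat -> R) (t : nat) (i : nat) : R :=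
  x i * exp (- (alpha_param m n eps * xi_t m n eps A x t i)).

Definition bregman (n : nat) (x y : nat -> R) : R :=
  fsum n (fun i => (if Req_EM_T (y i) 0 then 0 else y i * ln (y i / x i)) + x i - y i).

(* Main.v *)
Require Import Defs.
From Stdlib Require Import Reals Lra Lia List Psatz.
Open Scope R_scope.

Lemma fsum_S n f : fsum (S n) f = fsum n f + f n.
Proof.
  unfold fsum. rewrite seq_S, map_app, fold_right_app. simpl.
  generalize (f n). induction (map f (seq 0 n)); simpl; intros; [ring|].
  rewrite IHl. ring.
Qed.

Lemma fsum_lin n f g h k :
  (forall i, (i < n)%nat -> f i - g i + h i <= k i) ->
  fsum n f - fsum n g + fsum n h <= fsum n k.
Proof.
  induction n; intros H.
  - unfold fsum; simpl; lra.
  - rewrite !fsum_S. assert (H1 := H n (Nat.lt_succ_diag_r n)).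
    assert (fsum n f - fsum n g + fsum n h <= fsum n k).
    { apply IHn; intros; apply H; lia. }
    lra.
Qed.

Lemma fsum_scal n c f : fsum n (fun i => c * f i) = c * fsum n f.
Proof. induction n; [unfold fsum; simpl; ring|]. rewrite !fsum_S, IHn; ring. Qed.

Lemma fsum_nonneg n f : (forall i, (i < n)%nat -> 0 <= f i) -> 0 <= fsum n f.
Proof.
  induction n; intros H; [unfold fsum; simpl; lra|]. rewrite fsum_S.
  assert (0 <= f n) by (apply H; lia).
  assert (0 <= fsum n f) by (apply IHn; intros; apply H; lia). lra.
Qed.

Lemma poly_aux h : -1/320 <= h <= 1/320 -> 1 <= (1+h)^4 * (1 - 4*h + 32/3*h^2).
Proof. intros. nra. Qed.

Lemma exp_bound z : -1/80 <= z <= 1/80 -> exp (- z) <= 1 - z + 2/3 * z^2.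
Proof.
  intros Hz.
  assert (He : 1 + z/4 <= exp (z/4)) by apply exp_ineq1_le.
  assert (Hx : exp (-z) = / (exp (z/4))^4).
  { assert (E : exp (z/4)^4 = exp z).
    { simpl. rewrite Rmult_1_r, <- !exp_plus. f_equal. field. }
    rewrite E, exp_Ropp. reflexivity. }
  rewrite Hx.
  set (h := z/4) in *.
  assert (Hh : -1/320 <= h <= 1/320) by (unfold h; lra).
  assert (P := poly_aux h Hh).
  assert (Hp : 0 < (1+h)^4) by (apply pow_lt; lra).
  assert (Hle : (1+h)^4 <= exp h ^4) by (apply pow_incr; lra).
  assert (Hq : 0 < 1 - z + 2/3 * z^2) by nra.
  replace (1 - z + 2/3 * z^2) with (1 - 4*h + 32/3*h^2) in * by (unfold h; field).
  apply (Rmult_le_reg_l (exp h ^ 4)); [lra|].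
  rewrite Rinv_r by lra. nra.
Qed.

Lemma xi_bound m n eps A x i : -1 <= xi m n eps A x i <= 1.
Proof.
  unfold xi. destruct Rle_dec; [lra|]. destruct Rle_dec as [r|]; [|lra].
  revert r. unfold Rabs. destruct Rcase_abs; lra.
Qed.

Lemma xit_bound m n eps A x t i : -1 <= xi_t m n eps A x t i <= 1.
Proof.
  unfold xi_t. assert (H := xi_bound m n eps A x i).
  destruct Rlt_dec; [destruct Rle_dec|]; lra.
Qed.

Lemma ln2_ge : 1/2 <= ln 2.
Proof. assert (H := ln_lt_2). lra. Qed.

Lemma ln_le' x y : 0 < x -> x <= y -> ln x <= ln y.
Proof.
  intros Hx Hxy. destruct (Req_dec x y) as [e|e]; [subst; lra|].
  apply Rlt_le, ln_increasing; lra.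
Qed.

Theorem lemma3p7
  (m n : nat) (A : nat -> nat -> R) (OPT eps : R) (xk u : nat -> R) (t : nat)
  (Hn : (1 <= n)%nat)
  (HA : forall j i, (j < m)%nat -> (i < n)%nat -> 0 <= A j i)
  (Hcol : forall i, (i < n)%nat -> exists j, (j < m)%nat /\ A j i <> 0)
  (HOPT : is_packing_OPT m n A OPT)
  (Heps : 0 < eps <= 1 / 2)
  (Hxk : forall i, (i < n)%nat -> 0 < xk i)
  (Hval : fsum n xk <= (1 + eps) * OPT)
  (Ht : (t < w_param eps)%nat)
  (Hu : forall i, (i < n)%nat -> 0 <= u i) :
  fsum n (fun i => alpha_param m n eps * xi_t m n eps A xk t i * (xk i - u i))
  <= (alpha_param m n eps) ^ 2 * OPT + bregman n xk u
     - bregman n (x_next m n eps A xk t) u.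
Proof.
  assert (Hm : (1 <= m)%nat).
  { destruct (Hcol 0%nat) as [j [Hj _]]; lia. }
  set (a := alpha_param m n eps).
  assert (Ha : 0 < a <= 1/80).
  { unfold a, alpha_param, mu_param.
    assert (1 <= INR n) by (apply (le_INR 1); lia).
    assert (1 <= INR m) by (apply (le_INR 1); lia).
    assert (2 <= INR n * INR m / eps).
    { apply (Rmult_le_reg_r eps); [lra|]. unfold Rdiv. rewrite Rmult_assoc, Rinv_l by lra. nra. }
    assert (ln 2 <= ln (INR n * INR m / eps)) by (apply ln_le'; lra).
    assert (HL := ln2_ge).
    set (L := ln (INR n * INR m / eps)) in *.
    split.
    - apply Rmult_lt_0_compat; [|lra]. apply Rmult_lt_0_compat; [lra|].
      apply Rinv_0_lt_compat; lra.
    - unfold Rdiv. apply (Rmult_le_reg_r (80 * L)); [lra|].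
      replace (eps * / (4 * L) * / 20 * (80 * L)) with eps by (field; lra). lra. }
  assert (Hsx : 0 <= fsum n xk) by (apply fsum_nonneg; intros; apply Rlt_le, Hxk; auto).
  assert (HOPT0 : 0 <= OPT) by nra.
  assert (Hmain : fsum n (fun i => a * xi_t m n eps A xk t i * (xk i - u i))
                  - fsum n (fun i => (if Req_EM_T (u i) 0 then 0 else u i * ln (u i / xk i)) + xk i - u i)
                  + fsum n (fun i => (if Req_EM_T (u i) 0 then 0 else u i * ln (u i / x_next m n eps A xk t i)) + x_next m n eps A xk t i - u i)
                  <= fsum n (fun i => 2/3 * a^2 * xk i)).
  { apply fsum_lin. intros i Hi.
    assert (Hx := Hxk i Hi). assert (Hui := Hu i Hi).
    assert (Hxi := xit_bound m n eps A xk t i).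
    set (z := xi_t m n eps A xk t i) in *.
    assert (Hb : exp (- (a * z)) <= 1 - a*z + 2/3 * (a*z)^2) by (apply exp_bound; nra).
    assert (Hzz : z*z <= 1) by nra.
    assert (Hz2 : (a*z)^2 <= a^2).
    { replace ((a*z)^2) with (a^2 * (z*z)) by ring.
      assert (0 <= a^2) by (apply pow_le; lra). nra. }
    unfold x_next. change (alpha_param m n eps) with a. change (xi_t m n eps A xk t i) with z.
    assert (Hk : a * z * xk i - xk i + xk i * exp (- (a * z)) <= 2/3 * a^2 * xk i) by nra.
    destruct Req_EM_T as [e|e].
    - rewrite e. lra.
    - assert (Hln : ln (u i / (xk i * exp (- (a * z)))) = ln (u i / xk i) + a * z).
      { replace (u i / (xk i * exp (- (a * z)))) with (u i / xk i * exp (a * z)).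
        - rewrite ln_mult, ln_exp; [reflexivity| |apply exp_pos].
          apply Rdiv_lt_0_compat; lra.
        - rewrite exp_Ropp. assert (0 < exp (a*z)) by apply exp_pos. field. lra. }
      rewrite Hln. nra. }
  rewrite fsum_scal in Hmain.
  unfold bregman. fold a.
  assert (2/3 * a^2 * fsum n xk <= a^2 * OPT).
  { assert (0 <= a^2) by (apply pow_le; lra).
    assert (2/3 * fsum n xk <= OPT) by nra.
    replace (2/3 * a^2 * fsum n xk) with (a^2 * (2/3 * fsum n xk)) by ring.
    apply Rmult_le_compat_l; lra. }
  lra.
Qed.
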